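(* Let $G$ be a clique tree on $n$ vertices with $b$ blocks, each block having at least $3$ vertices, and let $k=Z(G)$. Then $k=n-b$, and consequently $\lfloor n/2\rfloor+1\le k\le n-1$.
   Context: A block of a connected graph is a maximal connected subgraph without a cut vertex of its own; a clique tree is a connected graph each of whose blocks is a complete graph. $Z(G)$ denotes the zero forcing number: with vertices coloured blue or white, a blue vertex with exactly one white neighbour turns that neighbour blue; $Z(G)$ is the minimum size of an initially blue set from which all vertices eventually become blue. *)

(* Defs.v *)
From mathcomp Require Import all_boot.
Set Implicit Arguments. Unset Strict Implicit. Unset Printing Implicit Defensive.

(* A simple graph on a finite vertex type T is given by an edge relation
   e : rel T, assumed symmetric and irreflexive in the theorem. *)
Section Graphs.
Variables (T : finType) (e : rel T).

Definition induced_rel (S : {set T}) : rel T :=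
  [rel x y | [&& e x y, x \in S & y \in S]].

(* the subgraph induced on S is connected (the empty graph counts as connected) *)
Definition connected_on (S : {set T}) : bool :=
  [forall x in S, forall y in S, connect (induced_rel S) x y].

Definition no_cut_connected (S : {set T}) : bool :=
  connected_on S && [forall v in S, connected_on (S :\ v)].

(* blocks: maximal connected subgraphs without a cut vertex
   (maximal such subgraphs are automatically induced) *)
Definition blocks : {set {set T}} := [set S | maxset no_cut_connected S].

Definition is_clique (S : {set T}) : bool :=
  [forall x in S, forall y in S, (x != y) ==> e x y].

Definition clique_tree : bool :=
  connected_on setT && [forall S in blocks, is_clique S].

Definition force_step (B : {set T}) : {set T} :=
  B :|: [set w | [exists u in B, (w \notin B) && (e u w)
                    && (#|[set x | e u x & x \notin B]| == 1)]].

(* the final coloured set (the process stabilises after at most #|T| rounds) *)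
Definition force_closure (B : {set T}) : {set T} := iter #|T| force_step B.

Definition zero_forcing_set (B : {set T}) : bool := force_closure B == setT.

(* zero forcing number: minimum size of a zero forcing set
   (setT is always one, so #|T| is a valid default) *)
Definition zero_forcing_number : nat :=
  \big[minn/#|T|]_(B : {set T} | zero_forcing_set B) #|B|.

End Graphs.

(* Main.v *)
Require Import Defs.
From mathcomp Require Import all_boot.
Set Implicit Arguments. Unset Strict Implicit. Unset Printing Implicit Defensive.

Section Main.
Variables (T : finType) (e : rel T).
Hypotheses (e_sym : symmetric e) (e_irr : irreflexive e).

Local Notation con X := (connect (induced_rel e X)).

Lemma ind_sym (X : {set T}) : symmetric (induced_rel e X).
Proof. by move=> x y; rewrite /induced_rel /= e_sym; case: (x \in X); case: (y \in X); rewrite ?andbF. Qed.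

Lemma con_sym (X : {set T}) (x y : T) : con X x y = con X y x.
Proof. exact: (sym_connect_sym (ind_sym X)). Qed.

Lemma con_mono (X Y : {set T}) (x y : T) : X \subset Y -> con X x y -> con Y x y.
Proof.
move=> sXY; apply: connect_sub => u v /= /and3P[huv hu hv].
by apply: connect1; rewrite /induced_rel /= huv (subsetP sXY _ hu) (subsetP sXY _ hv).
Qed.

Lemma con_edge (X : {set T}) (x y : T) : x \in X -> y \in X -> e x y -> con X x y.
Proof. by move=> hx hy hxy; apply: connect1; rewrite /induced_rel /= hxy hx hy. Qed.

Lemma path_con (X : {set T}) (x : T) s : path e x s -> {subset x :: s <= X} -> con X x (last x s).
Proof.
elim: s x => [|y s IH] x /=; first by [].
move=> /andP[hxy hp] hsub.
apply: (connect_trans (y := y)).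
  by apply: con_edge => //; apply: hsub; rewrite !inE eqxx ?orbT.
by apply: IH => // t ht; apply: hsub; rewrite inE ht orbT.
Qed.

Lemma hub_conn (X : {set T}) h : h \in X -> (forall y, y \in X -> con X y h) -> connected_on e X.
Proof.
move=> hh hall; apply/forallP => x; apply/implyP => hx.
apply/forallP => y; apply/implyP => hy.
by apply: (connect_trans (hall x hx)); rewrite con_sym; apply: hall.
Qed.

Lemma clique_conn (S : {set T}) : is_clique e S -> connected_on e S.
Proof.
move=> hc; apply/forallP => x; apply/implyP => hx.
apply/forallP => y; apply/implyP => hy.
case: (eqVneq x y) => [->|nxy]; first exact: connect0.
apply: con_edge => //.
by move/forallP: hc => /(_ x) /implyP /(_ hx) /forallP /(_ y) /implyP /(_ hy) /implyP; apply.
Qed.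

Lemma cliqueP (S : {set T}) x y : is_clique e S -> x \in S -> y \in S -> x != y -> e x y.
Proof.
by move=> hc hx hy; move/forallP: hc => /(_ x) /implyP /(_ hx) /forallP /(_ y) /implyP /(_ hy) /implyP.
Qed.

Lemma clique_sub (S S' : {set T}) : is_clique e S -> S' \subset S -> is_clique e S'.
Proof.
move=> hc sS; apply/forallP => x; apply/implyP => hx; apply/forallP => y; apply/implyP => hy.
apply/implyP; apply: cliqueP hc _ _; exact: (subsetP sS).
Qed.

Lemma clique_ncc (S : {set T}) : is_clique e S -> no_cut_connected e S.
Proof.
move=> hc; rewrite /no_cut_connected clique_conn //=.
apply/forallP => v; apply/implyP => _; apply: clique_conn.
by apply: clique_sub hc _; apply: subsetDl.
Qed.


Lemma seg a a' q1 y q2 : path e a (rcons (q1 ++ y :: q2) a') ->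
  path e a (rcons q1 y) /\ path e y (rcons q2 a').
Proof.
by rewrite rcons_cat /= -cat_rcons cat_path last_rcons => /andP[].
Qed.

Lemma pre_con (X : {set T}) a q1 y : path e a (rcons q1 y) ->
  a \in X -> {subset q1 <= X} -> y \in X -> con X a y.
Proof.
move=> hp ha hq hy; have := path_con hp; rewrite last_rcons; apply.
move=> t; rewrite inE mem_rcons inE => /or3P[/eqP->|/eqP->|/hq] //.
Qed.

Lemma splitE (y : T) q : y \in q -> exists q1 q2, q = q1 ++ y :: q2.
Proof. by case/splitPr => q1 q2; exists q1, q2. Qed.

Lemma ear (S : {set T}) a a' q : is_clique e S -> a \in S -> a' \in S -> a != a' ->
  all (fun t => t \notin S) q -> uniq q -> path e a (rcons q a') ->
  no_cut_connected e (S :|: [set t in q]).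
Proof.
move=> hc ha ha' naa' /allP hout hu hp.
set X := S :|: [set t in q].
have inS t : t \in S -> t \in X by rewrite inE => ->.
have inQ t : t \in q -> t \in X by rewrite !inE => ->; rewrite orbT.
have nSq t : t \in q -> t \notin S by move/hout.
apply/andP; split.
  apply: (hub_conn (h := a)) (inS _ ha) _ => y; rewrite !inE => /orP[yS|yq].
    case: (eqVneq y a) => [->|nya]; first exact: connect0.
    by apply: con_edge; rewrite ?inS // (cliqueP hc).
  case: (splitE yq) => q1 [q2 hq]; subst.
  have [hp1 _] := seg hp.
  rewrite con_sym; apply: pre_con hp1 (inS _ ha) _ _.
    by move=> t tq; apply: inQ; rewrite mem_cat tq.
  by apply: inQ; rewrite mem_cat inE eqxx orbT.
apply/forallP => v; apply/implyP => vX.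
case: (boolP (v \in q)) => vq.
  case: (splitE vq) => q1 [q2 hq]; subst.
  have [hp1 hp2] := seg hp.
  move: hu; rewrite cat_uniq /= => /and4P[_ hnot vnq2 _].
  have vnq1 : v \notin q1 by apply: contraNN hnot => h; rewrite /= h.
  have vnS : v \notin S by apply: nSq; rewrite mem_cat inE eqxx orbT.
  have inXv t : t \in X -> t != v -> t \in X :\ v by move=> h1 h2; rewrite in_setD1 h2 h1.
  have nav : a != v by apply: contraNneq vnS => <-.
  have na'v : a' != v by apply: contraNneq vnS => <-.
  have aXv : a \in X :\ v by apply: inXv (inS _ ha) _; apply: contraNneq vnS => <-.
  have a'Xv : a' \in X :\ v by apply: inXv (inS _ ha') _; apply: contraNneq vnS => <-.
  apply: (hub_conn aXv) => y; rewrite !inE => /andP[nyv /orP[yS|yq]].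
    case: (eqVneq y a) => [->|nya]; first exact: connect0.
    by apply: con_edge; rewrite ?inXv ?inS // (cliqueP hc).
  move: yq; rewrite mem_cat inE (negPf nyv) /= => /orP[yq1|yq2].
    case: (splitE yq1) => r1 [r2 hq]; subst.
    have [hr1 _] := seg hp1.
    rewrite con_sym; apply: pre_con hr1 aXv _ _.
      move=> t tr; apply: inXv; first by apply: inQ; rewrite !mem_cat tr.
      by apply: contraNneq vnq1 => <-; rewrite mem_cat tr.
    by apply: inXv nyv; apply: inQ; rewrite !mem_cat inE eqxx ?orbT.
  case: (splitE yq2) => r1 [r2 hq]; subst.
  have [_ hr2] := seg hp2.
  apply: (connect_trans (y := a')).
    apply: pre_con hr2 _ _ a'Xv.
      by apply: inXv nyv; apply: inQ; rewrite !(mem_cat, inE) eqxx ?orbT.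
    by move=> t tr; apply: inXv; [apply: inQ; rewrite !(mem_cat, inE) tr !orbT | apply: contraNneq vnq2 => <-; rewrite !(mem_cat, inE) tr !orbT].
  by apply: con_edge => //; rewrite (cliqueP hc) // eq_sym.
have inXv t : t \in X -> t != v -> t \in X :\ v by move=> h1 h2; rewrite in_setD1 h2 h1.
have vS : v \in S by move: vX; rewrite !inE (negPf vq) orbF.
case: (eqVneq a v) => [eav|nav].
  have na'v : a' != v by rewrite -eav eq_sym.
  have a'Xv : a' \in X :\ v by apply: inXv (inS _ ha') _.
  apply: (hub_conn a'Xv) => y; rewrite !inE => /andP[nyv /orP[yS|yq]].
    case: (eqVneq y a') => [->|nya]; first exact: connect0.
    by apply: con_edge; rewrite ?inXv ?inS // (cliqueP hc).
  case: (splitE yq) => q1 [q2 hq]; subst.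
  have [_ hp2] := seg hp.
  apply: pre_con hp2 _ _ a'Xv.
    by apply: inXv nyv; apply: inQ; rewrite !(mem_cat, inE) eqxx ?orbT.
  by move=> t tr; apply: inXv; [apply: inQ; rewrite !(mem_cat, inE) tr !orbT | apply: contraNneq vq => <-; rewrite !(mem_cat, inE) tr !orbT].
have aXv : a \in X :\ v by apply: inXv (inS _ ha) _.
apply: (hub_conn aXv) => y; rewrite !inE => /andP[nyv /orP[yS|yq]].
  case: (eqVneq y a) => [->|nya]; first exact: connect0.
  by apply: con_edge; rewrite ?inXv ?inS // (cliqueP hc).
case: (splitE yq) => q1 [q2 hq]; subst.
have [hp1 _] := seg hp.
rewrite con_sym; apply: pre_con hp1 aXv _ _.
  by move=> t tr; apply: inXv; [apply: inQ; rewrite !(mem_cat, inE) tr ?orbT | apply: contraNneq vq => <-; rewrite !(mem_cat, inE) tr ?orbT].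
by apply: inXv nyv; apply: inQ; rewrite !(mem_cat, inE) eqxx ?orbT.
Qed.


Lemma rev_walk a b q : path e a (rcons q b) -> path e b (rcons (rev q) a).
Proof.
move=> hp.
have := hp; rewrite -(eq_path (e := fun z : T => e^~ z)); last by move=> u v /=; rewrite e_sym.
by rewrite -rev_path last_rcons belast_rcons rev_cons.
Qed.

Lemma simplify a b q (P : pred T) : q != [::] -> all P q -> ~~ P b ->
  path e a (rcons q b) ->
  exists2 q', (q' != [::]) && all P q' & uniq q' && path e a (rcons q' b).
Proof.
case: q => [|y q0] // _ /= /andP[Py Pq0] nPb /andP[hay hp].
have yb : y != b by apply: contraNneq nPb => <-.
have [p' [hp' hu hsub hl]] : exists p', [/\ path e y p', uniq (y :: p'), {subset p' <= rcons q0 b} & last y p' = b].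
  have: forall l, l = last y (rcons q0 b) -> exists p', [/\ path e y p', uniq (y :: p'), {subset p' <= rcons q0 b} & last y p' = l].
    move=> l ->; case: (shortenP hp) => p' h1 h2 h3; by exists p'.
  by apply; rewrite last_rcons.
case/lastP: p' hp' hu hsub hl => [|q'' bb] hp' hu hsub /= hl; first by rewrite hl eqxx in yb.
rewrite last_rcons in hl; subst bb.
have : uniq (rcons (y :: q'') b) by [].
rewrite rcons_uniq => /andP[bnot uq].
exists (y :: q'').
  rewrite /= Py /=; apply/allP => t tq.
  have : t \in rcons q0 b by apply: hsub; rewrite mem_rcons inE tq orbT.
  rewrite mem_rcons inE => /orP[/eqP tb|]; last by move/allP: Pq0; apply.
  by move: bnot; rewrite inE -tb tq orbT.
by rewrite uq /= hay.
Qed.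

Lemma exit (U : {set T}) (r : rel T) x p : x \in U -> path r x p -> last x p \notin U ->
  exists a b, [/\ a \in U, b \notin U & r a b].
Proof.
elim: p x => [|y p IH] x /=; first by move=> ->.
move=> xU /andP[hxy hp] hl.
case: (boolP (y \in U)) => yU; first exact: IH yU hp hl.
by exists x, y.
Qed.


Definition Qp (U : {set T}) := forall x z q, x \in U -> z \in U -> x != z ->
  q != [::] -> all (fun t => t \notin U) q -> path e x (rcons q z) -> False.

Definition wh (U X : {set T}) u := [set t | (t \in U) && e u t && (t \notin X)].

Definition FP (U W : {set T}) := forall X : {set T}, U :\: W \subset X ->
  (forall u, u \in X -> u \in U -> #|wh U X u| != 1) -> U \subset X.

Record Inv (U W : {set T}) (SS : {set {set T}}) : Prop := {
 i_ne : exists u0, u0 \in U;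
 i_Q : Qp U;
 i_W : W \subset U;
 i_SS : forall S, S \in SS -> (S \subset U) && (S \in blocks e);
 i_card : #|W| = #|SS|;
 i_cl : forall K : {set T}, K \subset U -> 1 < #|K| -> is_clique e K -> exists2 S, S \in SS & K \subset S;
 i_FP : FP U W;
 i_sz : (2 * #|SS|).+1 <= #|U| }.

Hypothesis hconn : forall x y, connect (induced_rel e setT) x y.
Hypothesis hblk : forall S, S \in blocks e -> is_clique e S.
Hypothesis hbig : forall S, S \in blocks e -> 3 <= #|S|.

Lemma pair_clique x y : e x y -> is_clique e [set x; y].
Proof.
move=> hxy; apply/forallP => a; apply/implyP; rewrite !inE => /orP[]/eqP-> ;
apply/forallP => c; apply/implyP; rewrite !inE => /orP[]/eqP-> ;
by rewrite ?eqxx ?hxy ?implybT // e_sym hxy implybT.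
Qed.

Lemma grow U W SS : Inv U W SS -> U != setT ->
  exists U' W' SS', Inv U' W' SS' /\ #|U| < #|U'|.
Proof.
case=> [[u0 u0U] hQ hW hSS hcard hcl hFP hsz] nUT.
have [y0 _ y0U] : exists2 y0, y0 \in setT & y0 \notin U.
  by apply/subsetPn; apply: contra nUT => h; rewrite eqEsubset subsetT h.
have [x [y [xU yU hxy]]] : exists x y, [/\ x \in U, y \notin U & e x y].
  case/connectP: (hconn u0 y0) => p hp hl.
  have := exit u0U hp; rewrite -hl => /(_ y0U) [a [b [aU bU hab]]].
  by exists a, b; split => //; move: hab => /and3P[].
have nxy : x != y by apply: contraNneq yU => <-.
have [S mS sxy] := maxset_exists (clique_ncc (pair_clique hxy)).
have SB : S \in blocks e by rewrite inE.
have cS : is_clique e S := hblk SB.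
have S3 := hbig SB.
have xS : x \in S by apply: (subsetP sxy); rewrite set21.
have yS : y \in S by apply: (subsetP sxy); rewrite set22.
have sU : forall s, s \in S -> s != x -> s \notin U.
  move=> s sS nsx; apply/negP => sU.
  apply: (hQ x s [:: y]) => //; first by rewrite eq_sym.
    by rewrite /= yU.
  rewrite /= hxy (cliqueP cS) //; by apply: contraNneq yU => ->.
have sb : forall s z, s \in S -> s != x -> z \in U -> e s z -> z = x.
  move=> s z sS nsx zU hsz0; apply/eqP; apply/negPn/negP => nzx.
  apply: (hQ x z [:: s]) => //; first by rewrite eq_sym.
    by rewrite /= sU.
  by rewrite /= hsz0 (cliqueP cS) // eq_sym.
have [v [vS vx vy]] : exists v, [/\ v \in S, v != x & v != y].
  have : 0 < #|S :\ x :\ y|.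
    move: S3; rewrite (cardsD1 x) xS (cardsD1 y (S :\ x)) !inE eq_sym nxy yS /=.
    by rewrite !add1n !ltnS.
  by rewrite card_gt0 => /set0Pn[v]; rewrite !inE => /and3P[]; exists v.
have SUx : U :&: S = [set x].
  apply/setP => t; rewrite !inE; case: (eqVneq t x) => [->|ntx]; first by rewrite xU xS.
  by apply/negbTE; apply/nandP; case: (boolP (t \in S)) => tS; [left; apply: sU | right].
have SnSS : S \notin SS.
  by apply/negP => /hSS /andP[/subsetP /(_ y yS)]; rewrite (negPf yU).
have yW : y \notin W by apply: contra yU; apply: (subsetP hW).
exists (U :|: S), (y |: W), (S |: SS); split; last first.
  by rewrite cardsU SUx cards1; rewrite -addnBA ?(leq_trans _ S3) //; rewrite -[X in X < _]addn0 ltn_add2l subn_gt0 (leq_trans _ S3).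
split.
- by exists u0; rewrite inE u0U.
- move=> x1 z1 q x1U' z1U' n1 qne qall hp.
  have qU : all (fun t => t \notin U) q.
    by apply: sub_all qall => t /=; rewrite inE negb_or => /andP[].
  have qS : all (fun t => t \notin S) q.
    by apply: sub_all qall => t /=; rewrite inE negb_or => /andP[].
  have C3 : forall a b q0, a \in U -> a \notin S -> b \in S -> b \notin U ->
      q0 != [::] -> all (fun t => t \notin U) q0 -> path e a (rcons q0 b) -> False.
    move=> a b q0 aU aS bS bU q0ne q0U hp0.
    apply: (hQ a x (rcons q0 b)) => //.
    - by apply: contraNneq aS => ->.
    - by case: (q0).
    - by rewrite all_rcons bU.
    rewrite rcons_path hp0 last_rcons (cliqueP cS) //.
    by apply: contraNneq bU => ->.
  have earC : x1 \in S -> z1 \in S -> False.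
    move=> x1S z1S.
    have nz : ~~ (fun t => t \notin S) z1 by rewrite /= negbK.
    have [q' /andP[q'ne q'S] /andP[q'u hp']] := simplify qne qS nz hp.
    have hn := ear cS x1S z1S n1 q'S q'u hp'.
    have := maxsetP mS => -[_ /(_ _ hn (subsetUl _ _))] heq.
    clear hn; case: q' q'ne q'S heq {hp' q'u} => [//|t q'] _ /= /andP[tS _] heq.
    by move: tS; rewrite -heq !inE eqxx orbT.
  move: x1U' z1U'; rewrite !inE.
  case: (boolP (x1 \in U)) => x1U; case: (boolP (z1 \in U)) => z1U /= x1S z1S.
  + exact: (hQ x1 z1 q).
  + case: (boolP (x1 \in S)) => x1S'; first exact: earC.
    exact: (C3 x1 z1 q).
  + case: (boolP (z1 \in S)) => z1S'; first exact: earC.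
    have rqne : rev q != [::] by rewrite -size_eq0 size_rev size_eq0.
    have rqU : all (fun t => t \notin U) (rev q) by rewrite all_rev.
    exact: (C3 z1 x1 (rev q) z1U z1S' x1S x1U rqne rqU (rev_walk hp)).
  + exact: earC.
- by apply/subsetP => t; rewrite !inE => /orP[/eqP->|/(subsetP hW) ->]; rewrite ?yS ?orbT.
- move=> S'; rewrite in_setU1 => /orP[/eqP->|/hSS /andP[sU' ->]]; first by rewrite subsetUr SB.
  by rewrite andbT (subset_trans sU' (subsetUl _ _)).
- by rewrite cardsU1 yW cardsU1 SnSS hcard.
- move=> K sK K1 cK.
  case: (boolP (K \subset U)) => [KU|/subsetPn[s sK' sNU]].
    by have [S' S'in KS'] := hcl K KU K1 cK; exists S' => //; rewrite inE S'in orbT.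
  exists S; first by rewrite setU11.
  have sS : s \in S by move: (subsetP sK s sK'); rewrite inE (negPf sNU).
  have nsx : s != x by apply: contraNneq sNU => ->.
  apply/subsetP => k kK; case: (eqVneq k s) => [->//|nks].
  have esk : e s k by rewrite (cliqueP cK) // eq_sym.
  case: (boolP (k \in U)) => kU; first by rewrite (sb s k).
  by move: (subsetP sK k kK); rewrite inE (negPf kU).
- move=> X hsub hfix.
  have inX t : t \in U :|: S -> t \notin y |: W -> t \in X.
    by move=> h1 h2; apply: (subsetP hsub); rewrite inE h2 h1.
  have vNU : v \notin U by apply: sU.
  have vX : v \in X.
    apply: inX; first by rewrite inE vS orbT.
    by rewrite !inE negb_or vy /=; apply: contra vNU; apply: (subsetP hW).
  have whU : (S \subset X) \/ (x \notin X) -> forall u, u \in X -> u \in U ->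
      wh U X u = wh (U :|: S) X u.
    move=> hor u uX uU; apply/setP => t; rewrite !inE.
    case: (boolP (t \in U)) => tU //=.
    case: (boolP (t \in S)) => tS //=.
    case: (boolP (e u t)) => eut //=.
    have ntx : t != x by apply: contraNneq tU => ->.
    have := sb t u tS ntx uU; rewrite e_sym eut => /(_ isT) eux.
    case: hor => [/subsetP /(_ t tS) ->//|]; by rewrite -eux uX.
  have UWX : U :\: W \subset X.
    apply/subsetP => t; rewrite !inE => /andP[tW tU]; apply: inX; first by rewrite inE tU.
    by rewrite !inE negb_or tW andbT; apply: contraNneq yU => <-.
  case: (boolP (x \in X)) => xX.
    have yX : y \in X.
      apply/negPn/negP => yNX.
      have := hfix v vX; rewrite inE vS orbT => /(_ isT) /negP; apply; apply/cards1P; exists y.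
      apply/setP => t; rewrite !inE; apply/idP/idP; last first.
        by move/eqP->; rewrite yS orbT yNX andbT (cliqueP cS) // eq_sym.
      case/andP => /andP[tUS evt] tX.
      case: (boolP (t \in U)) => tU.
        by move: tX; rewrite (sb v t vS vx tU evt) xX.
      have : t \in y |: W by apply: contraLR tX => h; rewrite negbK; apply: inX => //; rewrite inE.
      by rewrite !inE => /orP[//|/(subsetP hW)]; rewrite (negPf tU).
    have SX : S \subset X.
      apply/subsetP => s sS; case: (boolP (s \in y |: W)); last by apply: inX; rewrite inE sS orbT.
      rewrite !inE => /orP[/eqP->//|/(subsetP hW) sU'].
      case: (eqVneq s x) => [->//|nsx]; by move: (sU s sS nsx); rewrite sU'.
    have UX : U \subset X.
      apply: hFP UWX _ => u uX uU; rewrite (whU (or_introl SX) u uX uU); apply: hfix uX _.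
      by rewrite inE uU.
    by rewrite subUset UX SX.
  have UX : U \subset X.
    apply: hFP UWX _ => u uX uU; rewrite (whU (or_intror xX) u uX uU); apply: hfix uX _.
    by rewrite inE uU.
  by move: xX; rewrite (subsetP UX x xU).
- rewrite cardsU1 SnSS /= cardsU SUx cards1.
  apply: (leq_trans (_ : _ <= #|U| + 2)); first by rewrite mulnDr muln1 addnC -addSn leq_add2r.
  rewrite -addnBA ?(leq_trans _ S3) // leq_add2l.
  by rewrite leq_subRL ?(leq_trans _ S3).
Qed.


Lemma base r : Inv [set r] set0 set0.
Proof.
split.
- by exists r; rewrite set11.
- by move=> x z q; rewrite !inE => /eqP-> /eqP->; rewrite eqxx.
- exact: sub0set.
- by move=> S; rewrite inE.
- by rewrite !cards0.
- move=> K sK K1 _; have := subset_leq_card sK; rewrite cards1 => h.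
  by move: (leq_trans K1 h).
- by move=> X; rewrite setD0.
- by rewrite cards0 cards1.
Qed.

Lemma compl_lt (U U' : {set T}) : #|U| < #|U'| -> #|~: U'| < #|~: U|.
Proof.
move=> h; have a := cardsC U'; have b := cardsC U.
by rewrite -(ltn_add2l #|U'|) a -b ltn_add2r.
Qed.

Lemma grow_all n U W SS : #|~: U| <= n -> Inv U W SS ->
  exists W' SS', Inv setT W' SS'.
Proof.
elim: n U W SS => [|n IH] U W SS hc hI; case: (eqVneq U setT) => [eU|nUT];
  try by (subst U; exists W, SS).
all: have [U' [W' [SS' [hI' hlt]]]] := grow hI nUT.
all: have hlt' := compl_lt hlt.
- by move: (leq_trans hlt' hc).
- by apply: IH hI'; rewrite -ltnS (leq_trans hlt' hc).
Qed.


Lemma fs_ext (B : {set T}) : B \subset force_step e B.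
Proof. exact: subsetUl. Qed.

Lemma iter_mono (B : {set T}) k1 k2 : k1 <= k2 ->
  iter k1 (force_step e) B \subset iter k2 (force_step e) B.
Proof.
elim: k2 => [|k IH]; first by rewrite leqn0 => /eqP->.
rewrite leq_eqVlt => /orP[/eqP->//|]; rewrite ltnS => /IH h.
by apply: (subset_trans h); rewrite iterS; apply: fs_ext.
Qed.

Lemma closure_fix (B : {set T}) : force_step e (force_closure e B) = force_closure e B.
Proof.
rewrite /force_closure.
have H : forall k, (k <= #|iter k (force_step e) B|) \/
    (iter k.+1 (force_step e) B = iter k (force_step e) B).
  elim=> [|k [IH|IH]]; first by left.
  - case: (eqVneq (iter k.+1 (force_step e) B) (iter k (force_step e) B)) => [E|NE].
      by right; rewrite iterS E.
    left; apply: (leq_trans _ (_ : #|iter k (force_step e) B| < _)); first by [].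
    rewrite ltn_neqAle subset_leq_card ?iter_mono // andbT.
    apply: contra NE => /eqP hc; apply/eqP; apply/eqP; rewrite eq_sym eqEcard.
    by rewrite iter_mono // hc leqnn.
  - by right; rewrite iterS IH.
case: (H #|T|) => [h|]; last by rewrite -iterS.
have E : iter #|T| (force_step e) B = setT.
  by apply/eqP; rewrite eqEcard subsetT cardsT h.
by rewrite E; apply/eqP; rewrite eqEsubset subsetT fs_ext.
Qed.

Lemma fix_prop (X : {set T}) : force_step e X = X ->
  forall u, u \in X -> #|[set t | e u t & t \notin X]| != 1.
Proof.
move=> hX u uX; apply/negP => /cards1P[w hw].
have : w \in [set t | e u t & t \notin X] by rewrite hw set11.
rewrite inE => /andP[euw wX].
have : w \in force_step e X.
  rewrite inE; apply/orP; right; rewrite inE; apply/existsP; exists u.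
  by rewrite uX wX euw hw cards1.
by rewrite hX (negPf wX).
Qed.

Lemma first_time (B : {set T}) w n : w \notin B -> w \in iter n (force_step e) B ->
  exists k, [/\ k < n, w \notin iter k (force_step e) B & w \in iter k.+1 (force_step e) B].
Proof.
move=> wB; elim: n => [|n IH]; first by move=> h; rewrite h in wB.
case: (boolP (w \in iter n (force_step e) B)) => h.
  by case: (IH h) => k [lk h1 h2]; exists k; split => //; apply: ltnW.
by move=> h'; exists n.
Qed.

Lemma lower (B : {set T}) : zero_forcing_set e B -> #|~: B| <= #|blocks e|.
Proof.
move=> /eqP hB.
pose F k := iter k (force_step e) B.
have Fmono : forall k1 k2, k1 <= k2 -> F k1 \subset F k2 by move=> *; apply: iter_mono.
pose good S w := (S \in blocks e) && (w \in S) && [exists k : 'I_#|T|, exists u in S,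
  (u \in F k) && (w \notin F k) && ([set t | e u t & t \notin F k] == [set w])].
pose f w := odflt set0 [pick S | good S w].
have fgood : forall w, w \notin B -> good (f w) w.
  move=> w wB; rewrite /f; case: pickP => [S //|none]; exfalso.
  have wn : w \in F #|T| by rewrite /F -/(force_closure e B) hB inE.
  have [k [lk wk wk1]] := first_time wB wn.
  move: wk1; rewrite iterS inE (negPf wk) /= inE => /existsP[u /andP[uk /andP[/andP[_ euw] /cards1P[w' hw']]]].
  have ww' : [set t | e u t & t \notin F k] = [set w].
    have : w \in [set t | e u t & t \notin F k] by rewrite inE euw wk.
    by rewrite hw' inE => /eqP->.
  have [S mS sS] := maxset_exists (clique_ncc (pair_clique euw)).
  have := none S; rewrite /good inE mS (subsetP sS w) ?set22 //=.
  move/negbT/negP; apply; apply/existsP; exists (Ordinal lk); apply/existsP; exists u.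
  by rewrite (subsetP sS u) ?set21 //= uk wk ww' eqxx.
have key : forall S wa wb ka kb ua, S \in blocks e -> ua \in S -> ua \in F ka ->
    [set t | e ua t & t \notin F ka] = [set wa] -> wb \in S -> wb \notin F kb -> ka <= kb ->
    wa = wb.
  move=> S wa wb ka kb ua SB uS uF hw wS wF lk.
  case: (eqVneq wb ua) => [E|nbu]; first by move: wF; rewrite E (subsetP (Fmono _ _ lk) _ uF).
  have ewb : e ua wb by rewrite (cliqueP (hblk SB)) // eq_sym.
  case: (boolP (wb \in F ka)) => wbF; first by move: wF; rewrite (subsetP (Fmono _ _ lk) _ wbF).
  have : wb \in [set t | e ua t & t \notin F ka] by rewrite inE ewb wbF.
  by rewrite hw inE => /eqP->.
have finj : {in ~: B &, injective f}.
  move=> w1 w2; rewrite !inE => w1B w2B hf.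
  have g1 := fgood w1 w1B; have g2 := fgood w2 w2B; rewrite hf in g1.
  move: g1 g2; set S := f w2.
  move=> /andP[/andP[SB w1S] /existsP[k1 /existsP[u1 /andP[u1S /andP[/andP[u1F w1F] /eqP h1]]]]].
  move=> /andP[/andP[_ w2S] /existsP[k2 /existsP[u2 /andP[u2S /andP[/andP[u2F w2F] /eqP h2]]]]].
  case: (leqP k1 k2) => lk.
    exact: (key S w1 w2 k1 k2 u1).
  by apply/esym; apply: (key S w2 w1 k2 k1 u2) => //; apply: ltnW.
rewrite -(card_in_imset finj); apply: subset_leq_card.
apply/subsetP => S /imsetP[w]; rewrite inE => wB ->.
by move: (fgood w wB) => /andP[/andP[]].
Qed.

End Main.

From mathcomp Require Import zify.
Lemma arith (n b s : nat) : (2 * s).+1 <= n -> b <= s -> 0 < b -> n./2 + 1 <= n - b <= n - 1.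
Proof. move=> *. rewrite -divn2. apply/andP; split; lia. Qed.

Lemma bigmin_le (I : finType) (P : pred I) (F : I -> nat) x0 j : P j ->
  \big[minn/x0]_(i | P i) F i <= F j.
Proof.
move=> Pj; rewrite -big_filter.
have : j \in [seq i <- index_enum I | P i] by rewrite mem_filter Pj mem_index_enum.
elim: [seq i <- index_enum I | P i] => [//|i s IH]; rewrite inE big_cons.
case/orP => [/eqP->|/IH h]; first exact: geq_minl.
exact: leq_trans (geq_minr _ _) h.
Qed.

Theorem mainTheorem3 (T : finType) (e : rel T)
  (e_sym : symmetric e) (e_irr : irreflexive e)
  (hct : clique_tree e)
  (hbig : forall S, S \in blocks e -> 3 <= #|S|) :
  let n := #|T| in
  let b := #|blocks e| in
  let k := zero_forcing_number e in
  k = n - b /\ n./2 + 1 <= k <= n - 1.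
Proof.
move=> n b k.
have [hc hcl] : connected_on e setT /\ (forall S, S \in blocks e -> is_clique e S).
  by move/andP: hct => [hc /forallP hf]; split => // S SB; move: (hf S); rewrite SB.
have hconn : forall x y, connect (induced_rel e setT) x y.
  move=> x y.
  by move/forallP: hc => /(_ x) /implyP /(_ (in_setT x)) /forallP /(_ y) /implyP /(_ (in_setT y)).
have c0 : is_clique e set0 by apply/forallP => x; rewrite inE.
have [B0 mB0 _] := maxset_exists (clique_ncc c0).
have B0b : B0 \in blocks e by rewrite inE.
have [r rB0] : exists r, r \in B0.
  by apply/set0Pn; rewrite -card_gt0 (leq_trans _ (hbig _ B0b)).
have [W [SS hI]] := grow_all e_sym hconn hcl hbig (leqnn _) (base e r).
have bSS : b <= #|SS|.
  apply: subset_leq_card; apply/subsetP => B BB.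
  have [S SS_S BS] := i_cl hI (subsetT B) (ltnW (hbig _ BB)) (hcl _ BB).
  have /andP[_ SB] := i_SS hI SS_S.
  move: BB; rewrite inE => /maxsetP[_ mx].
  by move: SB; rewrite inE => /maxsetP[PS _]; rewrite -(mx S PS BS).
have zf : zero_forcing_set e (~: W).
  set X := force_closure e (~: W).
  have hfix := closure_fix e (~: W); rewrite -/X in hfix.
  have sub : setT \subset X.
    apply: (i_FP hI).
      by rewrite setTD; apply: (iter_mono e (~: W) (leq0n #|T|)).
    move=> u uX _.
    have -> : wh e setT X u = [set t | e u t & t \notin X].
      by apply/setP => t; rewrite !inE.
    exact: fix_prop hfix u uX.
  by rewrite /zero_forcing_set eqEsubset subsetT sub.
have lowB : forall B, zero_forcing_set e B -> n - b <= #|B|.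
  move=> B zB; have h := lower e_sym hcl zB; have h1 := cardsC B.
  rewrite /n /b leq_subLR -h1 (addnC #|blocks e|) leq_add2l; exact: h.
have kup : k <= #|~: W|.
  by rewrite /k /zero_forcing_number; apply: bigmin_le.
have klo : n - b <= k.
  rewrite /k /zero_forcing_number; apply: (big_ind (fun m => n - b <= m)).
  - exact: leq_subr.
  - by move=> x y hx hy; rewrite leq_min hx hy.
  - exact: lowB.
have cW : #|~: W| = n - #|SS|.
  by rewrite -(i_card hI) /n -(cardsC W) addKn.
have sz := i_sz hI; rewrite cardsT -/n in sz.
have b1 : 0 < b by rewrite /b card_gt0; apply/set0Pn; exists B0.
have keq : k = n - b.
  apply/eqP; rewrite eqn_leq klo andbT (leq_trans kup) // cW.
  by apply: leq_sub2l.
split => //; rewrite keq; exact: arith sz bSS b1.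
Qed.
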